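(* Let $G$ be a finite group of order $n\ge 3$, $f:G\to\mathbb{Q}$ a class function with $f(g)=f(g^{-1})$ for all $g\in G$, and $\Gamma_f=\operatorname{Cay}(G,f)$. Then $\operatorname{Deg}(\Gamma_f)$ divides $\varphi(n)/2$.
   Context: The Cayley colour graph $\operatorname{Cay}(G,f)$ has vertex set $G$ and adjacency matrix $[f(gh^{-1})]_{g,h\in G}$. $\operatorname{Deg}(\Gamma_f)$ is the degree over $\mathbb{Q}$ of the smallest subfield of $\mathbb{C}$ containing all eigenvalues of this matrix. $\varphi$ is Euler's totient function. *)

(* Defs.v *)
From HB Require Import structures.
From mathcomp Require Import all_boot all_order all_algebra all_fingroup all_field.
Set Implicit Arguments.
Unset Strict Implicit.
Unset Printing Implicit Defensive.
Import GRing.Theory.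
Local Open Scope ring_scope.

(* Adjacency matrix of the Cayley colour graph Cay(G, f), with the vertex set
   G = gT indexed through the canonical enumeration of gT:
   entry (g, h) is f (g * h^-1). *)
Definition cayley_mx (gT : finGroupType) (f : gT -> rat) : 'M[rat]_#|gT| :=
  \matrix_(i, j) f (enum_val i * (enum_val j)^-1)%g.

(* Main.v *)
Require Import Defs.
From HB Require Import structures.
From mathcomp Require Import all_boot all_order all_algebra all_fingroup all_field all_character.
From mathcomp Require Import ring.
Set Implicit Arguments.
Unset Strict Implicit.
Unset Printing Implicit Defensive.
Import GRing.Theory Num.Theory.
Local Open Scope ring_scope.

Lemma io_alg (K : fieldExtType rat) (io : {rmorphism K -> algC}) (a : rat) :
  io (in_alg K a) = ratr a.
Proof. by rewrite /= rmorphZ_num rmorph1 mulr1. Qed.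

Lemma adjoin_degree_C (K : fieldExtType rat) (io : {rmorphism K -> algC}) (x : K) :
  adjoin_degree 1%VS x = (size (minCpoly (io x))).-1.
Proof.
have [p [Dp mon_p] dv_p] := minCpolyP (io x).
have nz_p : p != 0 by exact: monic_neq0.
set q := minPoly 1%AS x.
have aP i: q`_i \in 1%VS by apply/polyOverP; apply: minPolyOver.
have{aP} a_ i := sig_eqW (vlineP _ _ (aP i)).
pose q0 := \poly_(i < size q) sval (a_ i).
have Dq : map_poly (in_alg K) q0 = q.
  apply/polyP=> i; rewrite coef_map /q0 coef_poly /=.
  case: ifP => lti; last by rewrite scale0r nth_default // leqNgt lti.
  by case: (a_ i) => b /= ->.
have iq : map_poly io q = map_poly ratr q0.
  rewrite -Dq -map_poly_comp; apply: eq_map_poly => b /=; exact: io_alg.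
have nz_q : q != 0 by rewrite monic_neq0 // monic_minPoly.
have nz_q0 : q0 != 0 by apply: contraNneq nz_q => q00; rewrite -Dq q00 rmorph0.
have szq : size q0 = size q by rewrite -Dq size_map_poly.
have le1 : (size p <= size q)%N.
  rewrite -szq; apply: dvdp_leq => //; rewrite -dv_p -iq.
  by rewrite /root horner_map /= (rootP (root_minPoly _ _)) rmorph0.
have le2 : (size q <= size p)%N.
  have -> : size p = size (map_poly (in_alg K) p).
    by rewrite size_map_poly.
  apply: dvdp_leq; first by rewrite map_poly_eq0.
  apply: minPoly_dvdp.
    apply/polyOverP=> i; rewrite coef_map /=.
    by rewrite rpredZ // mem1v.
  apply/rootP; apply: (fmorph_inj io); rewrite rmorph0 -horner_map /=.
  rewrite -map_poly_comp (eq_map_poly (io_alg io)) -Dp.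
  exact/rootP/root_minCpoly.
have := size_minPoly 1%AS x; rewrite -/q => Sq.
have eqs : size q = size p by apply/eqP; rewrite eqn_leq le1 le2.
rewrite Dp size_map_poly.
by rewrite -eqs Sq.
Qed.

Lemma adjoin_closedP (K : fieldExtType rat) (io : {rmorphism K -> algC})
  (P : algC -> Prop) :
  (forall q, P (ratr q)) -> (forall x y, P x -> P y -> P (x + y)) ->
  (forall x y, P x -> P y -> P (x * y)) ->
  forall rs, (forall y, y \in rs -> P (io y)) ->
  forall x, x \in <<1 & rs>>%VS -> P (io x).
Proof.
move=> Pr PD PM; elim/last_ind => [|rs y IH] Prs x.
  rewrite adjoin_nil subfield_closed => /vlineP[k ->].
  by rewrite io_alg.
rewrite adjoin_rcons => /Fadjoin_polyP[p Kp ->].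
have IH' : forall c, c \in <<1 & rs>>%VS -> P (io c).
  by apply: IH => u urs; apply: Prs; rewrite mem_rcons inE urs orbT.
have Py : P (io y) by apply: Prs; rewrite mem_rcons inE eqxx.
rewrite horner_coef rmorph_sum /=.
apply: (big_ind P); first by rewrite -(rmorph0 ratr); apply: Pr.
  exact: (PD).
move=> i _; rewrite rmorphM rmorphXn /=; apply: (PM).
  by apply: IH'; apply: (polyOverP Kp).
elim: (nat_of_ord i) => [|k IHk]; first by rewrite expr0 -(rmorph1 ratr); apply: Pr.
by rewrite exprS; apply: (PM).
Qed.

Lemma conjD' (a b : algC) : (a + b)^* = a^* + b^*. Proof. exact: rmorphD. Qed.
Lemma conjM' (a b : algC) : (a * b)^* = a^* * b^*. Proof. exact: rmorphM. Qed.
Lemma conjV' (a : algC) : (a^-1)^* = (a^*)^-1. Proof. exact: fmorphV. Qed.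

Definition inQz (z x : algC) := exists p : {poly rat}, x = (map_poly ratr p).[z].

Lemma prim_conj (n : nat) (z : algC) : n.-primitive_root z -> z^* = z^-1.
Proof.
move=> pz; have n0 := prim_order_gt0 pz.
have zn1 : z ^+ n = 1 := prim_expr_order pz.
have nz1 : `|z| = 1.
  by apply/eqP; rewrite -(pexpr_eq1 n0) ?normr_ge0 // -normrX zn1 normr1.
by rewrite invC_norm nz1 expr1n invr1 mul1r.
Qed.

Lemma prim_neq0 (n : nat) (z : algC) : n.-primitive_root z -> z != 0.
Proof.
move=> pz; apply/eqP => z0; have := prim_expr_order pz.
by rewrite z0 expr0n gtn_eqF ?(prim_order_gt0 pz) // => /eqP; rewrite eq_sym oner_eq0.
Qed.

Lemma key_degree (n : nat) (z c : algC) : (2 < n)%N -> n.-primitive_root z ->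
  c^* = c -> inQz z c -> ((size (minCpoly c)).-1 %| (totient n)./2)%N.
Proof.
move=> n2 pz cR [p Dc].
have zc := prim_conj pz.
have nz_z := prim_neq0 pz.
have zR : z^* != z.
  apply/eqP => zR; suff : (n <= 2)%N by rewrite leqNgt n2.
  apply: dvdn_leq => //.
  by rewrite (prim_order_dvd pz) expr2 -{1}zR zc mulVf.
have [Qn [QnC [[|zn []] // [Dz]] genQn]] := num_field_exists [:: z].
pose cn := (map_poly (in_alg Qn) p).[zn].
have Dcn : QnC cn = c.
  by rewrite Dc /cn -horner_map /= Dz -map_poly_comp (eq_map_poly (io_alg QnC)).
have nz_zn : zn != 0 by rewrite -(fmorph_eq0 QnC) Dz.
pose wn := zn + zn^-1.
have Dwn : QnC wn = z + z^-1 by rewrite rmorphD fmorphV /= Dz.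
pose F := <<1; cn>>%AS; pose F' := <<F; wn>>%AS.
have realF' : forall x, x \in F' -> (QnC x)^* = QnC x.
  move=> x Fx; apply: (@adjoin_closedP _ QnC (fun x => x^* = x) _ _ _ [:: cn; wn]).
  - by move=> q; rewrite fmorph_rat.
  - by move=> a b /= ha hb; rewrite conjD' ha hb.
  - by move=> a b /= ha hb; rewrite conjM' ha hb.
  - move=> y; rewrite !inE => /orP[]/eqP->; first by rewrite Dcn.
    by rewrite Dwn conjD' conjV' zc invrK addrC.
  - by rewrite adjoin_cons adjoin_seq1.
have zF' : zn \notin F'.
  apply/negP => /realF'; rewrite Dz => zR'; by rewrite zR' eqxx in zR.
have deg2 : adjoin_degree F' zn = 2.
  have le : (adjoin_degree F' zn <= 2)%N.
    pose q := ('X - zn%:P) * ('X - (zn^-1)%:P).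
    have qE : q = 'X^2 - wn%:P * 'X + 1.
      rewrite /q /wn polyCD -[1 in RHS](polyC1) -(mulfV nz_zn) polyCM.
      ring.
    have : minPoly F' zn %| q.
      apply: minPoly_dvdp.
        by rewrite qE rpredD ?rpredB ?rpredX ?rpredM ?polyOverX ?polyOverC ?memv_adjoin ?rpred1.
      by rewrite /q rootM root_XsubC eqxx.
    move/dvdp_leq; rewrite /q mulf_eq0 !polyXsubC_eq0 /= => /(_ isT).
    by rewrite size_minPoly size_mul ?polyXsubC_eq0 // !size_XsubC.
  have ne1 : adjoin_degree F' zn != 1 by rewrite adjoin_deg_eq1.
  have gt0 : (0 < adjoin_degree F' zn)%N by [].
  by move: le ne1 gt0; case: (adjoin_degree F' zn) => [|[|[|]]].
have full1 : (<<1; zn>>%VS = fullv) by rewrite -adjoin_seq1.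
have full2 : (<<F'; zn>>%VS = fullv :> {vspace Qn}).
  apply/eqP; rewrite eqEsubv subvf /= -full1; apply: adjoinSl; exact: sub1v.
have d1 : \dim (fullv : {vspace Qn}) = totient n.
  have := dim_Fadjoin 1%AS zn; rewrite full1 dimv1 muln1 => ->.
  by rewrite (adjoin_degree_C QnC) Dz (minCpoly_cyclotomic pz) size_cyclotomic.
have d2 : \dim (fullv : {vspace Qn}) = (2 * (adjoin_degree F wn * (size (minCpoly c)).-1))%N.
  have := dim_Fadjoin F' zn; rewrite full2 deg2 => ->.
  rewrite dim_Fadjoin dim_Fadjoin dimv1 muln1 (adjoin_degree_C QnC) Dcn.
  done.
rewrite -d1 d2 mul2n doubleK.
exact: dvdn_mull.
Qed.

Lemma inQz_rat z q : inQz z (ratr q).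
Proof. by exists q%:P; rewrite map_polyC hornerC. Qed.
Lemma inQzD z x y : inQz z x -> inQz z y -> inQz z (x + y).
Proof. by move=> [p ->] [q ->]; exists (p + q); rewrite rmorphD hornerD. Qed.
Lemma inQzM z x y : inQz z x -> inQz z y -> inQz z (x * y).
Proof. by move=> [p ->] [q ->]; exists (p * q); rewrite rmorphM hornerM. Qed.
Lemma inQzX z k : inQz z (z ^+ k).
Proof. by exists 'X^k; rewrite map_polyXn hornerXn. Qed.
Lemma inQz_sum z (I : Type) (s : seq I) (P : pred I) (F : I -> algC) :
  (forall i, P i -> inQz z (F i)) -> inQz z (\sum_(i <- s | P i) F i).
Proof.
move=> h; apply: (big_ind (inQz z)) => //.
- by rewrite -(rmorph0 ratr); apply: inQz_rat.
- exact: inQzD.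
Qed.

Definition lmx (gT : finGroupType) (t : gT) : 'M[algC]_#|gT| :=
  \matrix_(i, j) ((enum_val i == t * enum_val j)%g)%:R.

Lemma enum_val_eqE (T : finType) (j : 'I_#|T|) (x : T) :
  (enum_val j == x) = (j == enum_rank x).
Proof. by apply/eqP/eqP => [<-|->]; rewrite ?enum_valK ?enum_rankK. Qed.

Lemma sum_delta (T : finType) (x : T) (F : T -> algC) :
  \sum_t ((t == x)%:R * F t) = F x.
Proof.
rewrite (bigD1 x) //= eqxx mul1r big1 ?addr0 // => t /negbTE ->.
by rewrite mul0r.
Qed.

Lemma lmx_repr (gT : finGroupType) : mx_repr [set: gT] (@lmx gT).
Proof.
split.
  apply/matrixP => i j; rewrite !mxE mul1g (inj_eq enum_val_inj).
  done.
move=> x y _ _; apply/matrixP => i k; rewrite !mxE.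
under eq_bigr => j _ do rewrite !mxE [enum_val j == _]enum_val_eqE mulrC.
by rewrite sum_delta enum_rankK mulgA.
Qed.

Definition lrepr (gT : finGroupType) : mx_representation algC [set: gT]%G #|gT| :=
  MxRepresentation (lmx_repr gT).

Lemma A_sum (gT : finGroupType) (f : gT -> rat) :
  map_mx ratr (cayley_mx f) = \sum_t ratr (f t) *: lmx t.
Proof.
apply/matrixP => i j; rewrite summxE !mxE.
have e t : (enum_val i == t * enum_val j)%g = (t == enum_val i * (enum_val j)^-1)%g.
  by apply/eqP/eqP => [->|->]; rewrite ?mulgK ?mulgKV.
under eq_bigr => t _ do rewrite !mxE e mulrC.
by rewrite sum_delta.
Qed.

Lemma A_comm (gT : finGroupType) (f : gT -> rat)
  (hclass : forall x y : gT, f (x ^ y)%g = f x) (t : gT) :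
  lmx t *m map_mx ratr (cayley_mx f) = map_mx ratr (cayley_mx f) *m lmx t.
Proof.
apply/matrixP => i k; rewrite !mxE.
have e j : (enum_val i == t * enum_val j)%g = (j == enum_rank (t^-1 * enum_val i))%g.
  rewrite -enum_val_eqE.
  by apply/eqP/eqP => [->|->]; rewrite ?mulKg ?mulKVg.
under eq_bigr => j _ do rewrite !mxE e.
under [in RHS]eq_bigr => j _ do rewrite !mxE [enum_val j == _]enum_val_eqE mulrC.
rewrite !sum_delta !enum_rankK; congr (ratr _).
by rewrite -[RHS](hclass _ t) conjgE invMg !mulgA mulgKV.
Qed.

Lemma eig_trace (gT : finGroupType) (f : gT -> rat)
  (hclass : forall x y : gT, f (x ^ y)%g = f x) (a : algC) :
  eigenvalue (map_mx ratr (cayley_mx f)) a ->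
  exists d (rho : mx_representation algC [set: gT]%G d),
    (0 < d)%N /\ a *+ d = \sum_t ratr (f t) * cfRepr rho t.
Proof.
set A := map_mx ratr (cayley_mx f) => Ha.
set U := eigenspace A a.
have nzU : U != 0 := Ha.
have modU : mxmodule (lrepr gT) U.
  apply/mxmoduleP => t _; apply/sub_kermxP.
  rewrite /= -mulmxA.
  have -> : lmx t *m (A - a%:M) = (A - a%:M) *m lmx t.
    by rewrite mulmxBr mulmxBl A_comm // scalar_mxC.
  rewrite mulmxA.
  by rewrite mulmx_ker mul0mx.
exists (\rank U), (submod_repr modU); split; first by rewrite lt0n mxrank_eq0.
set rho := submod_repr modU.
have key : \sum_t ratr (f t) *: rho t = a%:M.
  apply: (@val_submod_inj _ _ U).
  rewrite linear_sum -scalemx1 linearZ /=.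
  have V1 : val_submod 1%:M *m A = a *: val_submod (1%:M : 'M_(\rank U)).
    apply/eqP; rewrite -subr_eq0 -mul_mx_scalar -mulmxBr; apply/eqP/sub_kermxP.
    exact: val_submodP.
  rewrite -V1 /A A_sum mulmx_sumr; apply: eq_bigr => t _.
  rewrite linearZ /= -scalemxAr; congr (_ *: _).
  by rewrite -[rho t]mul1mx (val_submodJ modU) ?inE.
have := congr1 mxtrace key; rewrite mxtrace_scalar => <-.
rewrite raddf_sum; apply: eq_bigr => t _.
by rewrite /= mxtraceZ cfunE inE mulr1n.
Qed.

Lemma eig_good (gT : finGroupType) (f : gT -> rat)
  (hclass : forall x y : gT, f (x ^ y)%g = f x)
  (hinv : forall x : gT, f (x^-1)%g = f x) (z : algC)
  (pz : #|gT|.-primitive_root z) (a : algC) :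
  eigenvalue (map_mx ratr (cayley_mx f)) a -> a^* = a /\ inQz z a.
Proof.
move=> /(eig_trace hclass) [d [rho [d0 Ha]]].
have nd : (d%:R : algC) != 0 by rewrite pnatr_eq0 -lt0n.
have Ha' : a = (\sum_t ratr (f t) * cfRepr rho t) * (d%:R)^-1.
  by rewrite -Ha -(mulr_natr a d) mulfK.
split.
  have Hc : a^* *+ d = a *+ d.
    have -> : a^* *+ d = (a *+ d)^* by rewrite rmorphMn.
    rewrite Ha rmorph_sum /= (reindex_inj invg_inj) /=.
    apply: eq_bigr => t _; rewrite conjM' fmorph_rat hinv.
    by rewrite -char_inv ?cfRepr_char // invgK.
  have : (a^* - a) *+ d == 0 by rewrite mulrnBl Hc subrr.
  by rewrite mulrn_eq0 gtn_eqF //= subr_eq0 => /eqP.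
rewrite Ha'; apply: inQzM.
  2: by rewrite -ratr_nat -fmorphV; apply: inQz_rat.

apply: inQz_sum => t _; apply: inQzM; first exact: inQz_rat.
have Gt : t \in [set: gT]%G by rewrite inE.
have [e [_ [e1 _] [-> _] _]] := repr_rsim_diag rho Gt.
apply: inQz_sum => i _.
have en : e 0 i ^+ #|gT| = 1.
  have /dvdnP[m Dm] := cyclic.order_dvdG Gt.
  by rewrite cardsT in Dm; rewrite Dm mulnC exprM e1 expr1n.
by have [k ->] := prim_rootP pz en; apply: inQzX.
Qed.

Unset Implicit Arguments.

Theorem mainTheorem9 (gT : finGroupType) (f : gT -> rat)
  (hn : (3 <= #|gT|)%N)
  (hclass : forall x y : gT, f (x ^ y)%g = f x)
  (hinv : forall x : gT, f (x^-1)%g = f x)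
  (L : fieldExtType rat) (iota : {rmorphism L -> algC}) (r : seq L)
  (hgen : <<1 & r>>%VS = fullv)
  (heig : forall a : algC,
      eigenvalue (map_mx ratr (cayley_mx f)) a = (a \in map iota r)) :
  (\dim {:L} %| (totient #|gT|)./2)%N.
Proof.
have n0 : (0 < #|gT|)%N by apply: leq_trans hn.
have [z pz] := C_prim_root_exists n0.
have good : forall x : L, (iota x)^* = iota x /\ inQz z (iota x).
  move=> x; apply: (@adjoin_closedP _ iota (fun c => c^* = c /\ inQz z c) _ _ _ r).
  - by move=> q; split; [rewrite fmorph_rat | apply: inQz_rat].
  - by move=> u v [hu qu] [hv qv]; split; [rewrite conjD' hu hv | apply: inQzD].
  - by move=> u v [hu qu] [hv qv]; split; [rewrite conjM' hu hv | apply: inQzM].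
  - move=> y yr; apply: (eig_good hclass hinv pz); rewrite heig; exact: map_f.
  - by rewrite hgen memvf.
have sep : separable 1%AS (fullv : {vspace L}).
  apply/separableP => y _; apply: pcharf0_separable.
  exact: (ftrans (pchar_lalg L) (pchar_num _)).
have Eg := eq_adjoin_separable_generator sep (sub1v _).
set g := separable_generator _ _ in Eg.
have -> : \dim {:L} = adjoin_degree 1%AS g.
  by rewrite {1}Eg dim_Fadjoin dimv1 muln1.
rewrite (adjoin_degree_C iota).
have [gR gQ] := good g.
exact: key_degree hn pz gR gQ.
Qed.
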